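(* Let $(\mathcal{C},\boxtimes,J)$ be a partially monoidal category whose tensor product partial functor $\mathcal{C}\times\mathcal{C}\xleftarrow{i}\mathcal{S}\xrightarrow{\boxtimes}\mathcal{C}$ has left leg $i$ a cosieve. Then $\mathcal{C}$ is a promonoidal category with representable unit presheaf and with a tensor profunctor $\otimes$ such that for each $(b,c)\in\mathcal{C}\times\mathcal{C}$ the presheaf $\otimes(-,b,c)$ is either representable or empty (namely $\otimes(-,b,c)=\mathcal{C}(-,b\boxtimes c)$ if $(b,c)\in\mathcal{S}$, $\otimes(-,b,c)=\varnothing$ otherwise, and unit $\mathcal{C}(-,J)$).
   Context: A partial functor $\mathcal{C}\rightharpoonup\mathcal{D}$ is a span of functors $\mathcal{C}\xleftarrow{i}\mathcal{S}\xrightarrow{F}\mathcal{D}$ where $i$ is a full and faithful opisofibration embedding $\mathcal{S}$ as a replete subcategory of $\mathcal{C}$; partial functors compose by pullback, and a morphism $(i,F)\to(j,G)$ of partial functors is a functor $\phi$ between the apexes with $j\phi=i$ and a natural transformation $F\Rightarrow G\phi$. These form a monoidal bicategory $\mathsf{PCat}$ (tensor: product of categories and of the underlying spans). A partially monoidal category is a category $\mathcal{C}$ with a partial functor $\boxtimes:\mathcal{C}\times\mathcal{C}\rightharpoonup\mathcal{C}$, a unit object $J$ (a functor $1\to\mathcal{C}$), and associativity and unit natural isomorphisms (2-cells in $\mathsf{PCat}$) satisfying the triangle and pentagon equations, i.e. a pseudomonoid in $\mathsf{PCat}$. The left leg $i:\mathcal{S}\to\mathcal{C}\times\mathcal{C}$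 is a cosieve if it is a discrete opfibration embedding $\mathcal{S}$ as a full subcategory closed under postcomposition: whenever $(b,c)\in\mathcal{S}$ and $(b,c)\to(b',c')$ is a morphism of $\mathcal{C}\times\mathcal{C}$, then $(b',c')\in\mathcal{S}$. A profunctor $P:\mathcal{A}\,{-\!\!\!\mapsto}\,\mathcal{B}$ is a functor $\mathcal{B}^{op}\times\mathcal{A}\to\mathsf{Set}$; profunctors compose by coend $(Q\circ P)(e,c)=\int^d Q(e,d)\times P(d,c)$. A promonoidal category is a category $\mathcal{C}$ with a profunctor $\otimes:\mathcal{C}\times\mathcal{C}\,{-\!\!\!\mapsto}\,\mathcal{C}$ (written $\otimes(a,b,c)$ with $a$ contravariant) and a presheaf $I:\mathcal{C}^{op}\to\mathsf{Set}$, with natural isomorphisms $\otimes\circ(\otimes\times 1)\cong\otimes\circ(1\times\otimes)$, $\otimes\circ(1\times I)\cong 1\cong\otimes\circ(I\times 1)$ satisfying pentagon and triangle equations (a pseudomonoid in the bicategory of profunctors). *)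

(* Defs.v *)
From Stdlib Require Import Relations.
Set Implicit Arguments.
Unset Strict Implicit.

(* Categories (morphism equality is Leibniz; composition diagrammatic) *)
Record Category := {
  Ob :> Type;
  Hom : Ob -> Ob -> Type;
  idm : forall a, Hom a a;
  comp : forall a b c, Hom a b -> Hom b c -> Hom a c;
  comp_id_l : forall a b (f : Hom a b), comp (idm a) f = f;
  comp_id_r : forall a b (f : Hom a b), comp f (idm b) = f;
  comp_assoc : forall a b c d (f : Hom a b) (g : Hom b c) (h : Hom c d),
      comp (comp f g) h = comp f (comp g h)
}.
Arguments Hom {C} : rename.
Arguments idm {C} a : rename.
Arguments comp {C} {a b c} : rename.
(* f ;; g  is "first f, then g", i.e. g o f *)
Notation "f ;; g" := (comp f g) (at level 40, left associativity).

(* Partially monoidal categories (pseudomonoids in PCat), unfolded.    *)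
(* The tensor partial functor C x C <- S -> C has as left leg the      *)
(* inclusion of the full replete subcategory S of C x C on the pairs   *)
(* satisfying Sdom; the tensor is a functor on that full subcategory.  *)
Unset Implicit Arguments.
Record PartMonCat (C : Category) := {
  Sdom : C -> C -> Prop;
  tensO : forall a b : C, Sdom a b -> C;
  tensM : forall (a b a' b' : C) (p : Sdom a b) (p' : Sdom a' b'),
      Hom a a' -> Hom b b' -> Hom (tensO _ _ p) (tensO _ _ p');
  tensM_id : forall (a b : C) (p : Sdom a b),
      tensM _ _ _ _ p p (idm a) (idm b) = idm _;
  tensM_comp : forall (a b a' b' a'' b'' : C) (p : Sdom a b) (p' : Sdom a' b')
      (p'' : Sdom a'' b'') (f : Hom a a') (g : Hom b b') (f' : Hom a' a'')
      (g' : Hom b' b''),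
      tensM _ _ _ _ p p'' (f ;; f') (g ;; g')
      = tensM _ _ _ _ p p' f g ;; tensM _ _ _ _ p' p'' f' g';
  unitO : C;
  (* associator: invertible 2-cell  box o (box x 1) => box o (1 x box)  *)
  (* its domain part: the two composite partial functors have the same  *)
  (* domain of definition in C x C x C                                  *)
  assoc_dom_lr : forall (a b c : C) (p : Sdom a b),
      Sdom (tensO _ _ p) c -> exists q : Sdom b c, Sdom a (tensO _ _ q);
  assoc_dom_rl : forall (a b c : C) (q : Sdom b c),
      Sdom a (tensO _ _ q) -> exists p : Sdom a b, Sdom (tensO _ _ p) c;
  assoc : forall (a b c : C) (p : Sdom a b) (p1 : Sdom (tensO _ _ p) c)
      (q : Sdom b c) (q1 : Sdom a (tensO _ _ q)),
      Hom (tensO _ _ p1) (tensO _ _ q1);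
  assoc_inv : forall (a b c : C) (p : Sdom a b) (p1 : Sdom (tensO _ _ p) c)
      (q : Sdom b c) (q1 : Sdom a (tensO _ _ q)),
      Hom (tensO _ _ q1) (tensO _ _ p1);
  assoc_inv_l : forall a b c p p1 q q1,
      assoc a b c p p1 q q1 ;; assoc_inv a b c p p1 q q1 = idm _;
  assoc_inv_r : forall a b c p p1 q q1,
      assoc_inv a b c p p1 q q1 ;; assoc a b c p p1 q q1 = idm _;
  assoc_nat : forall (a b c a' b' c' : C) (f : Hom a a') (g : Hom b b')
      (h : Hom c c') p p1 q q1 p' p1' q' q1',
      assoc a b c p p1 q q1 ;; tensM _ _ _ _ q1 q1' f (tensM _ _ _ _ q q' g h)
      = tensM _ _ _ _ p1 p1' (tensM _ _ _ _ p p' f g) h ;; assoc a' b' c' p' p1' q' q1';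
  (* unitors: invertible 2-cells  box o (J x 1) => 1,  box o (1 x J) => 1; *)
  (* domain part: the composites are defined everywhere                    *)
  lunit_dom : forall a : C, Sdom unitO a;
  runit_dom : forall a : C, Sdom a unitO;
  lunit : forall (a : C) (p : Sdom unitO a), Hom (tensO _ _ p) a;
  lunit_inv : forall (a : C) (p : Sdom unitO a), Hom a (tensO _ _ p);
  lunit_inv_l : forall a p, lunit a p ;; lunit_inv a p = idm _;
  lunit_inv_r : forall a p, lunit_inv a p ;; lunit a p = idm _;
  lunit_nat : forall (a a' : C) (f : Hom a a') p p',
      tensM _ _ _ _ p p' (idm unitO) f ;; lunit a' p' = lunit a p ;; f;
  runit : forall (a : C) (p : Sdom a unitO), Hom (tensO _ _ p) a;
  runit_inv : forall (a : C) (p : Sdom a unitO), Hom a (tensO _ _ p);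
  runit_inv_l : forall a p, runit a p ;; runit_inv a p = idm _;
  runit_inv_r : forall a p, runit_inv a p ;; runit a p = idm _;
  runit_nat : forall (a a' : C) (f : Hom a a') p p',
      tensM _ _ _ _ p p' f (idm unitO) ;; runit a' p' = runit a p ;; f;
  triangle : forall (a b : C) (p : Sdom a unitO) (p1 : Sdom (tensO _ _ p) b)
      (q : Sdom unitO b) (q1 : Sdom a (tensO _ _ q)) (r : Sdom a b),
      assoc a unitO b p p1 q q1 ;; tensM _ _ _ _ q1 r (idm a) (lunit b q)
      = tensM _ _ _ _ p1 r (runit a p) (idm b);
  pentagon : forall (a b c d : C)
      (ab : Sdom a b) (ab_c : Sdom (tensO _ _ ab) c)
      (abc_d : Sdom (tensO _ _ ab_c) d)
      (bc : Sdom b c) (a_bc : Sdom a (tensO _ _ bc))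
      (abc'_d : Sdom (tensO _ _ a_bc) d)
      (bc_d : Sdom (tensO _ _ bc) d) (a_bcd : Sdom a (tensO _ _ bc_d))
      (cd : Sdom c d) (b_cd : Sdom b (tensO _ _ cd))
      (a_bcd' : Sdom a (tensO _ _ b_cd))
      (ab_cd : Sdom (tensO _ _ ab) (tensO _ _ cd)),
      tensM _ _ _ _ abc_d abc'_d (assoc a b c ab ab_c bc a_bc) (idm d)
      ;; assoc a _ d a_bc abc'_d bc_d a_bcd
      ;; tensM _ _ _ _ a_bcd a_bcd' (idm a) (assoc b c d bc bc_d cd b_cd)
      = assoc _ c d ab_c abc_d cd ab_cd ;; assoc a b _ ab ab_cd b_cd a_bcd'
}.
Set Implicit Arguments.
Arguments Sdom {C} M : rename.
Arguments tensO {C} M {a b} : rename.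
Arguments tensM {C} M {a b a' b'} p p' : rename.
Arguments unitO {C} M : rename.

Definition IsCosieve (C : Category) (M : PartMonCat C) : Prop :=
  forall (a b a' b' : C), Sdom M a b -> Hom a a' -> Hom b b' -> Sdom M a' b'.

(* Coends of Type-valued functors, as setoids (carrier + the           *)
(* equivalence relation generated by the wedge relation).              *)
Section Coends.
Variable C : Category.

(* \int^x F x * G x, F contravariant, G covariant *)
Definition coend1 (F G : C -> Type) : Type := {x : C & (F x * G x)%type}.

Inductive coend1_step (F G : C -> Type)
    (Fm : forall x x' : C, Hom x x' -> F x' -> F x)
    (Gm : forall x x' : C, Hom x x' -> G x -> G x')
  : coend1 F G -> coend1 F G -> Prop :=
| c1step (x x' : C) (f : Hom x x') (s : F x') (t : G x) :
    coend1_step Fm Gm (existT _ x' (s, Gm _ _ f t)) (existT _ x (Fm _ _ f s, t)).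

Definition coend1_eq F G Fm Gm : relation (coend1 F G) :=
  clos_refl_sym_trans _ (@coend1_step F G Fm Gm).

(* \int^(x,y) A x * B x y * D y over C x C, A contravariant,
   B covariant in x and contravariant in y, D covariant *)
Definition coend2 (A : C -> Type) (B : C -> C -> Type) (D : C -> Type) : Type :=
  {x : C & {y : C & (A x * B x y * D y)%type}}.

Inductive coend2_step (A : C -> Type) (B : C -> C -> Type) (D : C -> Type)
    (Am : forall x x' : C, Hom x x' -> A x' -> A x)
    (Bm : forall x x' y y' : C, Hom x x' -> Hom y y' -> B x y' -> B x' y)
    (Dm : forall y y' : C, Hom y y' -> D y -> D y')
  : coend2 A B D -> coend2 A B D -> Prop :=
| c2step (x x' y y' : C) (f : Hom x x') (g : Hom y y') (s : A x') (t : B x y')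
    (u : D y) :
    coend2_step Am Bm Dm
      (existT _ x' (existT _ y' (s, Bm _ _ _ _ f (idm y') t, Dm _ _ g u)))
      (existT _ x (existT _ y (Am _ _ f s, Bm _ _ _ _ (idm x) g t, u))).

Definition coend2_eq A B D Am Bm Dm : relation (coend2 A B D) :=
  clos_refl_sym_trans _ (@coend2_step A B D Am Bm Dm).
End Coends.

(* Promonoidal categories (Day), i.e. pseudomonoids in Prof, unfolded. *)
(* T a b c = (x)(a,b,c), contravariant in a, covariant in b, c.        *)
(* Coend factors  C(c',c)  coming from identity profunctors are        *)
(* eliminated by the (co)Yoneda lemma, as in Day's definition.         *)
Section Promonoidal.
Variable C : Category.
Variable T : C -> C -> C -> Type.
Variable ta : forall a a' b b' c c' : C,
    Hom a' a -> Hom b b' -> Hom c c' -> T a b c -> T a' b' c'.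
Variable U : C -> Type.
Variable ua : forall a a' : C, Hom a' a -> U a -> U a'.

(* (x o (x x 1))(d; a, b, c) = \int^x T x a b * T d x c *)
Definition Lcar (d a b c : C) := coend1 (fun x => T x a b) (fun x => T d x c).
Definition Leq (d a b c : C) : relation (Lcar d a b c) :=
  @coend1_eq C (fun x => T x a b) (fun x => T d x c)
    (fun x x' f s => ta f (idm a) (idm b) s)
    (fun x x' f t => ta (idm d) f (idm c) t).
(* (x o (1 x x))(d; a, b, c) = \int^y T y b c * T d a y *)
Definition Rcar (d a b c : C) := coend1 (fun y => T y b c) (fun y => T d a y).
Definition Req (d a b c : C) : relation (Rcar d a b c) :=
  @coend1_eq C (fun y => T y b c) (fun y => T d a y)
    (fun y y' f s => ta f (idm b) (idm c) s)
    (fun y y' f t => ta (idm d) (idm a) f t).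
Definition Lact (d d' a a' b b' c c' : C) (fd : Hom d' d) (fa : Hom a a')
    (fb : Hom b b') (fc : Hom c c') (r : Lcar d a b c) : Lcar d' a' b' c' :=
  existT _ (projT1 r) (ta (idm _) fa fb (fst (projT2 r)),
                       ta fd (idm _) fc (snd (projT2 r))).
Definition Ract (d d' a a' b b' c c' : C) (fd : Hom d' d) (fa : Hom a a')
    (fb : Hom b b') (fc : Hom c c') (r : Rcar d a b c) : Rcar d' a' b' c' :=
  existT _ (projT1 r) (ta (idm _) fb fc (fst (projT2 r)),
                       ta fd fa (idm _) (snd (projT2 r))).

(* (x o (I x 1))(a; b) = \int^x U x * T a x b *)
Definition LUcar (a b : C) := coend1 U (fun x => T a x b).
Definition LUeq (a b : C) : relation (LUcar a b) :=
  @coend1_eq C U (fun x => T a x b) (fun x x' f u => ua f u) (fun x x' f t => ta (idm a) f (idm b) t).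
Definition LUact (a a' b b' : C) (fa : Hom a' a) (fb : Hom b b') (r : LUcar a b)
  : LUcar a' b' :=
  existT _ (projT1 r) (fst (projT2 r), ta fa (idm _) fb (snd (projT2 r))).
(* (x o (1 x I))(a; b) = \int^x U x * T a b x *)
Definition RUcar (a b : C) := coend1 U (fun x => T a b x).
Definition RUeq (a b : C) : relation (RUcar a b) :=
  @coend1_eq C U (fun x => T a b x) (fun x x' f u => ua f u) (fun x x' f t => ta (idm a) (idm b) f t).
Definition RUact (a a' b b' : C) (fa : Hom a' a) (fb : Hom b b') (r : RUcar a b)
  : RUcar a' b' :=
  existT _ (projT1 r) (fst (projT2 r), ta fa fb (idm _) (snd (projT2 r))).

(* target of the pentagon:  \int^(x,y) T x c d * T y b x * T e a y *)
Definition PTeq (e a b c d : C) :=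
  @coend2_eq C (fun x => T x c d) (fun x y => T y b x) (fun y => T e a y)
    (fun x x' f s => ta f (idm c) (idm d) s)
    (fun x x' y y' f g t => ta g (idm b) f t)
    (fun y y' g u => ta (idm e) (idm a) g u).

Unset Implicit Arguments.
Record Promonoidal := {
  ta_id : forall (a b c : C) (t : T a b c), ta (idm a) (idm b) (idm c) t = t;
  ta_comp : forall (a a1 a2 b b1 b2 c c1 c2 : C) (f1 : Hom a1 a) (g1 : Hom b b1)
      (h1 : Hom c c1) (f2 : Hom a2 a1) (g2 : Hom b1 b2) (h2 : Hom c1 c2)
      (t : T a b c),
      ta f2 g2 h2 (ta f1 g1 h1 t) = ta (f2 ;; f1) (g1 ;; g2) (h1 ;; h2) t;
  ua_id : forall (a : C) (u : U a), ua (idm a) u = u;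
  ua_comp : forall (a a1 a2 : C) (f1 : Hom a1 a) (f2 : Hom a2 a1) (u : U a),
      ua f2 (ua f1 u) = ua (f2 ;; f1) u;
  alpha : forall d a b c : C, Lcar d a b c -> Rcar d a b c;
  alpha_inv : forall d a b c : C, Rcar d a b c -> Lcar d a b c;
  alpha_resp : forall d a b c r r', Leq r r' -> Req (alpha d a b c r) (alpha d a b c r');
  alpha_inv_resp : forall d a b c r r',
      Req r r' -> Leq (alpha_inv d a b c r) (alpha_inv d a b c r');
  alpha_inv_l : forall d a b c r, Leq (alpha_inv d a b c (alpha d a b c r)) r;
  alpha_inv_r : forall d a b c r, Req (alpha d a b c (alpha_inv d a b c r)) r;
  alpha_nat : forall (d d' a a' b b' c c' : C) (fd : Hom d' d) (fa : Hom a a')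
      (fb : Hom b b') (fc : Hom c c') (r : Lcar d a b c),
      Req (alpha _ _ _ _ (Lact fd fa fb fc r)) (Ract fd fa fb fc (alpha _ _ _ _ r));
  (* left unitor  x o (I x 1) ~= 1 = Hom *)
  lam : forall a b : C, LUcar a b -> Hom a b;
  lam_inv : forall a b : C, Hom a b -> LUcar a b;
  lam_resp : forall a b r r', LUeq r r' -> lam a b r = lam a b r';
  lam_inv_l : forall a b r, LUeq (lam_inv a b (lam a b r)) r;
  lam_inv_r : forall a b h, lam a b (lam_inv a b h) = h;
  lam_nat : forall (a a' b b' : C) (fa : Hom a' a) (fb : Hom b b') r,
      lam _ _ (LUact fa fb r) = fa ;; (lam a b r ;; fb);
  rho : forall a b : C, RUcar a b -> Hom a b;
  rho_inv : forall a b : C, Hom a b -> RUcar a b;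
  rho_resp : forall a b r r', RUeq r r' -> rho a b r = rho a b r';
  rho_inv_l : forall a b r, RUeq (rho_inv a b (rho a b r)) r;
  rho_inv_r : forall a b h, rho a b (rho_inv a b h) = h;
  rho_nat : forall (a a' b b' : C) (fa : Hom a' a) (fb : Hom b b') r,
      rho _ _ (RUact fa fb r) = fa ;; (rho a b r ;; fb);
  (* pentagon, on representatives of \int^(x,y) T x a b * T y x c * T e y d *)
  pentagon_pro : forall (e a b c d x y : C) (s : T x a b) (t : T y x c) (w : T e y d),
      let r1 := alpha y a b c (existT _ x (s, t)) in
      let r2 := alpha e a (projT1 r1) d (existT _ y (snd (projT2 r1), w)) in
      let r3 := alpha (projT1 r2) b c d (existT _ (projT1 r1) (fst (projT2 r1), fst (projT2 r2))) in
      let r4 := alpha e x c d (existT _ y (t, w)) in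
      let r5 := alpha e a b (projT1 r4) (existT _ x (s, snd (projT2 r4))) in
      PTeq (existT _ (projT1 r3) (existT _ (projT1 r2)
              (fst (projT2 r3), snd (projT2 r3), snd (projT2 r2))))
           (existT _ (projT1 r4) (existT _ (projT1 r5)
              (fst (projT2 r4), fst (projT2 r5), snd (projT2 r5))));
  (* triangle, on representatives of \int^(x,y) U y * T x a y * T e x b *)
  triangle_pro : forall (e a b x y : C) (u : U y) (t1 : T x a y) (t2 : T e x b),
      let r := alpha e a y b (existT _ x (t1, t2)) in
      ta (idm e) (idm a) (lam (projT1 r) b (existT _ y (u, fst (projT2 r))))
         (snd (projT2 r))
      = ta (idm e) (rho x a (existT _ y (u, t1))) (idm b) t2
}.
End Promonoidal.
Set Implicit Arguments.

(* The candidate promonoidal structure induced by a partially monoidal *)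
(* category whose tensor domain is a cosieve:                          *)
(*   (x)(a; b, c) = C(a, b [x] c) if (b, c) in S, empty otherwise       *)
Definition pmT (C : Category) (M : PartMonCat C) (a b c : C) : Type :=
  {p : Sdom M b c & Hom a (tensO M p)}.

Definition pmTact (C : Category) (M : PartMonCat C) (cos : IsCosieve M)
    (a a' b b' c c' : C) (f : Hom a' a) (g : Hom b b') (h : Hom c c')
    (t : pmT M a b c) : pmT M a' b' c' :=
  existT _ (cos _ _ _ _ (projT1 t) g h)
    (f ;; (projT2 t ;; tensM M (projT1 t) (cos _ _ _ _ (projT1 t) g h) g h)).

Definition pmU (C : Category) (M : PartMonCat C) (a : C) : Type := Hom a (unitO M).

Definition pmUact (C : Category) (M : PartMonCat C) (a a' : C) (f : Hom a' a)
    (u : pmU M a) : pmU M a' := f ;; u.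

(* Main.v *)
Require Import Defs.
From Stdlib Require Import ProofIrrelevance Relations.

Lemma sd_bc (C : Category) (M : PartMonCat C) (a b c : C) (p : Sdom M a b)
  (p1 : Sdom M (tensO M p) c) : Sdom M b c.
Proof. destruct (assoc_dom_lr C M a b c p p1) as [q _]; exact q. Qed.
Lemma sd_a_bc (C : Category) (M : PartMonCat C) (a b c : C) (p : Sdom M a b)
  (p1 : Sdom M (tensO M p) c) (q : Sdom M b c) : Sdom M a (tensO M q).
Proof. destruct (assoc_dom_lr C M a b c p p1) as [q' H].
  rewrite (proof_irrelevance _ q q'); exact H. Qed.
Lemma sd_ab (C : Category) (M : PartMonCat C) (a b c : C) (q : Sdom M b c)
  (q1 : Sdom M a (tensO M q)) : Sdom M a b.
Proof. destruct (assoc_dom_rl C M a b c q q1) as [p _]; exact p. Qed.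
Lemma sd_ab_c (C : Category) (M : PartMonCat C) (a b c : C) (q : Sdom M b c)
  (q1 : Sdom M a (tensO M q)) (p : Sdom M a b) : Sdom M (tensO M p) c.
Proof. destruct (assoc_dom_rl C M a b c q q1) as [p' H].
  rewrite (proof_irrelevance _ p p'); exact H. Qed.

Arguments sd_bc {C M a b c}.
Arguments sd_a_bc {C M a b c}.
Arguments sd_ab {C M a b c}.
Arguments sd_ab_c {C M a b c}.

Definition pm_alpha (C : Category) (M : PartMonCat C) (cos : IsCosieve M)
  (d a b c : C) (r : Lcar (pmT M) d a b c) : Rcar (pmT M) d a b c :=
  match r with existT _ x (s, t) =>
    let p := projT1 s in
    let p1 := cos x c (tensO M p) c (projT1 t) (projT2 s) (idm c) in
    let q := sd_bc p p1 in
    let q1 := sd_a_bc p p1 q in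
    existT _ (tensO M q) (existT _ q (idm _),
      existT _ q1 (projT2 t ;; tensM M (projT1 t) p1 (projT2 s) (idm c) ;; assoc C M a b c p p1 q q1))
  end.

Definition pm_alpha_inv (C : Category) (M : PartMonCat C) (cos : IsCosieve M)
  (d a b c : C) (r : Rcar (pmT M) d a b c) : Lcar (pmT M) d a b c :=
  match r with existT _ y (s, t) =>
    let q := projT1 s in
    let q1 := cos a y a (tensO M q) (projT1 t) (idm a) (projT2 s) in
    let p := sd_ab q q1 in
    let p1 := sd_ab_c q q1 p in
    existT _ (tensO M p) (existT _ p (idm _),
      existT _ p1 (projT2 t ;; tensM M (projT1 t) q1 (idm a) (projT2 s) ;; assoc_inv C M a b c p p1 q q1))
  end.

Definition pm_lam (C : Category) (M : PartMonCat C) (a b : C) (r : LUcar (pmT M) (pmU M) a b) : Hom a b :=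
  match r with existT _ x (u, t) =>
    projT2 t ;; tensM M (projT1 t) (lunit_dom C M b) u (idm b) ;; lunit C M b (lunit_dom C M b) end.
Definition pm_lam_inv (C : Category) (M : PartMonCat C) (a b : C) (h : Hom a b) : LUcar (pmT M) (pmU M) a b :=
  existT _ (unitO M) (idm (unitO M), existT _ (lunit_dom C M b) (h ;; lunit_inv C M b (lunit_dom C M b))).
Definition pm_rho (C : Category) (M : PartMonCat C) (a b : C) (r : RUcar (pmT M) (pmU M) a b) : Hom a b :=
  match r with existT _ x (u, t) =>
    projT2 t ;; tensM M (projT1 t) (runit_dom C M b) (idm b) u ;; runit C M b (runit_dom C M b) end.
Definition pm_rho_inv (C : Category) (M : PartMonCat C) (a b : C) (h : Hom a b) : RUcar (pmT M) (pmU M) a b :=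
  existT _ (unitO M) (idm (unitO M), existT _ (runit_dom C M b) (h ;; runit_inv C M b (runit_dom C M b))).
Arguments pm_alpha {C M} cos {d a b c}.
Arguments pm_alpha_inv {C M} cos {d a b c}.
Arguments pm_lam {C M a b}.
Arguments pm_lam_inv {C M a b}.
Arguments pm_rho {C M a b}.
Arguments pm_rho_inv {C M a b}.
Ltac gen_proofs :=
  repeat match goal with
  | |- context [?p] =>
      match type of p with
      | Sdom _ _ _ => tryif is_var p then fail else (generalize p; intro)
      end
  end.
Ltac unify_proofs :=
  repeat match goal with
  | p : Sdom ?M ?a ?b, q : Sdom ?M ?a ?b |- _ =>
      tryif constr_eq p q then fail else
      (let E := fresh in pose proof (proof_irrelevance _ p q) as E; subst q)
  end.
Lemma tm_merge (C : Category) (M : PartMonCat C) a b a' b' a'' b'' (p : Sdom M a b) (p' : Sdom M a' b') (p'' : Sdom M a'' b'') f g f' g' :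
  tensM M p p' f g ;; tensM M p' p'' f' g' = tensM M p p'' (f;;f') (g;;g').
Proof. symmetry; apply tensM_comp. Qed.
Lemma tm_merge2 (C : Category) (M : PartMonCat C) a b a' b' a'' b'' (p : Sdom M a b) (p' : Sdom M a' b') (p'' : Sdom M a'' b'') f g f' g' z (h : Hom _ z) :
  tensM M p p' f g ;; (tensM M p' p'' f' g' ;; h) = tensM M p p'' (f;;f') (g;;g') ;; h.
Proof. rewrite <- comp_assoc, <- tensM_comp; reflexivity. Qed.
Lemma inv_tail (C : Category) (a b z : C) (f : Hom a b) (g : Hom b a) (h : Hom a z) :
  f ;; g = idm a -> f ;; (g ;; h) = h.
Proof. intros E; rewrite <- comp_assoc, E, comp_id_l; reflexivity. Qed.
Lemma ai_l C M a b c p p1 q q1 z (h : Hom _ z) : assoc C M a b c p p1 q q1 ;; (assoc_inv C M a b c p p1 q q1 ;; h) = h.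
Proof. apply inv_tail, assoc_inv_l. Qed.
Lemma ai_r C M a b c p p1 q q1 z (h : Hom _ z) : assoc_inv C M a b c p p1 q q1 ;; (assoc C M a b c p p1 q q1 ;; h) = h.
Proof. apply inv_tail, assoc_inv_r. Qed.
Lemma li_l C M a p z (h : Hom _ z) : lunit C M a p ;; (lunit_inv C M a p ;; h) = h.
Proof. apply inv_tail, lunit_inv_l. Qed.
Lemma li_r C M a p z (h : Hom _ z) : lunit_inv C M a p ;; (lunit C M a p ;; h) = h.
Proof. apply inv_tail, lunit_inv_r. Qed.
Lemma ri_l C M a p z (h : Hom _ z) : runit C M a p ;; (runit_inv C M a p ;; h) = h.
Proof. apply inv_tail, runit_inv_l. Qed.
Lemma ri_r C M a p z (h : Hom _ z) : runit_inv C M a p ;; (runit C M a p ;; h) = h.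
Proof. apply inv_tail, runit_inv_r. Qed.
Lemma assoc_nat2 C M a b c a' b' c' f g h p p1 q q1 p' p1' q' q1' z (k : Hom _ z) :
      assoc C M a b c p p1 q q1 ;; (tensM M q1 q1' f (tensM M q q' g h) ;; k)
      = tensM M p1 p1' (tensM M p p' f g) h ;; (assoc C M a' b' c' p' p1' q' q1' ;; k).
Proof. rewrite <- comp_assoc, (assoc_nat C M _ _ _ _ _ _ f g h p p1 q q1 p' p1' q' q1'), comp_assoc; reflexivity. Qed.
Ltac norm := repeat progress (rewrite ?comp_assoc, ?tensM_id, ?comp_id_l, ?comp_id_r, ?tm_merge, ?tm_merge2,
  ?assoc_inv_l, ?assoc_inv_r, ?lunit_inv_l, ?lunit_inv_r, ?runit_inv_l, ?runit_inv_r, ?ai_l, ?ai_r, ?li_l, ?li_r, ?ri_l, ?ri_r).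
Ltac exeq := repeat match goal with
  | |- existT ?P ?a _ = existT ?P ?a _ => apply (f_equal (existT P a))
  | |- (_, _) = (_, _) => apply (f_equal2 pair)
  end.
Lemma tail_eq (C : Category) (a b c z : C) (f : Hom a b) (g : Hom b c) (h : Hom a c) (k : Hom c z) :
  f ;; g = h -> f ;; (g ;; k) = h ;; k.
Proof. intros <-; rewrite comp_assoc; reflexivity. Qed.
Ltac pi := gen_proofs; intros; unify_proofs.

Lemma L_ta_id (C : Category) (M : PartMonCat C) (cos : IsCosieve M) :
 forall (a b c : C) (t : pmT M a b c), pmTact cos (idm a) (idm b) (idm c) t = t.
Proof.
  intros a b c [p t]; unfold pmTact; simpl. pi.
  rewrite tensM_id, comp_id_l, comp_id_r. reflexivity.
Qed.

Lemma L_ta_comp (C : Category) (M : PartMonCat C) (cos : IsCosieve M) :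
  forall (a a1 a2 b b1 b2 c c1 c2 : C) (f1 : Hom a1 a) 
          (g1 : Hom b b1) (h1 : Hom c c1) (f2 : Hom a2 a1) 
          (g2 : Hom b1 b2) (h2 : Hom c1 c2) (t : pmT M a b c),
        pmTact cos f2 g2 h2 (pmTact cos f1 g1 h1 t) =
        pmTact cos (f2;; f1) (g1;; g2) (h1;; h2) t.
Proof.
  intros. destruct t as [p t]; unfold pmTact; simpl. pi.
  rewrite (tensM_comp C M _ _ _ _ _ _ p s0 s). rewrite !comp_assoc. reflexivity.
Qed.

Lemma clos_eq A B (R : relation A) (f : A -> B) :
  (forall x y, R x y -> f x = f y) -> forall x y, clos_refl_sym_trans A R x y -> f x = f y.
Proof. intros H x y Hc; induction Hc; eauto; congruence. Qed.

Lemma L_alpha_resp (C : Category) (M : PartMonCat C) (cos : IsCosieve M) :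
  forall (d a b c : C) (r r' : Lcar (pmT M) d a b c),
        Leq (pmTact cos) r r' ->
        Req (pmTact cos) (pm_alpha cos r) (pm_alpha cos r').
Proof.
  intros d a b c r r' H. replace (pm_alpha cos r') with (pm_alpha cos r). apply rst_refl.
  revert r r' H. apply clos_eq. intros r r' H. destruct H as [x x' f [p s] [q t]].
  unfold pm_alpha, pmTact; simpl. pi.
  f_equal. f_equal. f_equal.
  rewrite !comp_id_l, !comp_assoc. f_equal.
  norm. reflexivity.
Qed.

Lemma step1 (C : Category) (F G : C -> Type) Fm Gm (x x' : C) (f : Hom x x') (s : F x') (t : G x) u v :
  u = existT _ x' (s, Gm _ _ f t) -> v = existT _ x (Fm _ _ f s, t) -> @coend1_step C F G Fm Gm u v.
Proof. intros -> ->; constructor. Qed.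

Lemma L_alpha_inv_resp (C : Category) (M : PartMonCat C) (cos : IsCosieve M) :
  forall (d a b c : C) (r r' : Rcar (pmT M) d a b c),
        Req (pmTact cos) r r' ->
        Leq (pmTact cos) (pm_alpha_inv cos r) (pm_alpha_inv cos r').
Proof.
  intros d a b c r r' H. replace (pm_alpha_inv cos r') with (pm_alpha_inv cos r). apply rst_refl.
  revert r r' H. apply clos_eq. intros r r' H. destruct H as [x x' f [p s] [q t]].
  unfold pm_alpha_inv, pmTact; simpl. pi.
  f_equal. f_equal. f_equal.
  norm. reflexivity.
Qed.

Lemma L_alpha_inv_l (C : Category) (M : PartMonCat C) (cos : IsCosieve M) :
  forall (d a b c : C) (r : Lcar (pmT M) d a b c),
        Leq (pmTact cos) (pm_alpha_inv cos (pm_alpha cos r)) r.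
Proof.
  intros d a b c [x [[p s] [q t]]]. unfold pm_alpha_inv, pm_alpha, pmTact; simpl. pi.
  apply rst_step. eapply (@step1 _ _ _ _ _ x (tensO M p) s (existT _ p (idm _)) (existT _ q t)).
  - unfold pmTact; simpl. pi. f_equal. f_equal. f_equal. norm. reflexivity.
  - unfold pmTact; simpl. pi. f_equal. f_equal. f_equal. norm. reflexivity.
Qed.

Lemma L_alpha_inv_r (C : Category) (M : PartMonCat C) (cos : IsCosieve M) :
  forall (d a b c : C) (r : Rcar (pmT M) d a b c),
        Req (pmTact cos) (pm_alpha cos (pm_alpha_inv cos r)) r.
Proof.
  intros d a b c [y [[q s] [q' t]]]. unfold pm_alpha_inv, pm_alpha, pmTact; simpl. pi.
  apply rst_step. eapply (@step1 _ _ _ _ _ y (tensO M q) s (existT _ q (idm _)) (existT _ q' t)).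
  - unfold pmTact; simpl. pi. f_equal. f_equal. f_equal. norm. reflexivity.
  - unfold pmTact; simpl. pi. f_equal. f_equal. f_equal. norm. reflexivity.
Qed.

Lemma L_alpha_nat (C : Category) (M : PartMonCat C) (cos : IsCosieve M) :
  forall (d d' a a' b b' c c' : C) (fd : Hom d' d) 
          (fa : Hom a a') (fb : Hom b b') (fc : Hom c c')
          (r : Lcar (pmT M) d a b c),
        Req (pmTact cos) (pm_alpha cos (Lact (pmTact cos) fd fa fb fc r))
          (Ract (pmTact cos) fd fa fb fc (pm_alpha cos r)).
Proof.
  intros d d' a a' b b' c c' fd fa fb fc [x [[p s] [q t]]].
  unfold pm_alpha, Lact, Ract, pmTact; simpl. pi.
  apply rst_step.
  match goal with |- coend1_step _ _ (existT _ ?x' (existT _ ?q' _, _)) (existT _ (tensO _ ?q0) (_, existT _ ?q1 ?t0)) =>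
    eapply (@step1 _ _ _ _ _ (tensO M q0) x' (tensM M q0 q' fb fc) (existT _ q' (idm _)) (existT _ q1 t0)) end.
  - unfold pmTact; simpl. pi. f_equal. f_equal. f_equal. norm. erewrite assoc_nat. norm. reflexivity.
  - unfold pmTact; simpl. pi. f_equal. f_equal. f_equal. norm. reflexivity.
Qed.

Lemma L_lam_resp (C : Category) (M : PartMonCat C) (cos : IsCosieve M) :
  forall (a b : C) (r r' : LUcar (pmT M) (pmU M) a b),
        LUeq (pmTact cos) (@pmUact C M) r r' -> pm_lam r = pm_lam r'.
Proof.
  intros a b. apply clos_eq. intros r r' H. destruct H as [x x' f u [p t]].
  unfold pm_lam, pmTact, pmUact; simpl. pi. norm. reflexivity.
Qed.

Lemma L_lam_inv_l (C : Category) (M : PartMonCat C) (cos : IsCosieve M) :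
  forall (a b : C) (r : LUcar (pmT M) (pmU M) a b),
        LUeq (pmTact cos) (@pmUact C M) (pm_lam_inv (pm_lam r)) r.
Proof.
  intros a b [x [u [p t]]]. unfold pm_lam, pm_lam_inv; simpl.
  apply rst_step. eapply (@step1 _ (pmU M) _ _ _ x (unitO M) u (idm _) (existT _ p t)).
  - unfold pmTact; simpl. pi. f_equal. f_equal. f_equal. norm. reflexivity.
  - unfold pmUact; simpl. norm. reflexivity.
Qed.

Lemma L_lam_inv_r (C : Category) (M : PartMonCat C) :
  forall (a b : C) (h : Hom a b), pm_lam (pm_lam_inv (M:=M) h) = h.
Proof. intros a b h. unfold pm_lam, pm_lam_inv; simpl. norm. reflexivity. Qed.

Lemma L_lam_nat (C : Category) (M : PartMonCat C) (cos : IsCosieve M) :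
  forall (a a' b b' : C) (fa : Hom a' a) (fb : Hom b b') (r : LUcar (pmT M) (pmU M) a b),
        pm_lam (LUact (pmTact cos) fa fb r) = fa;; (pm_lam r;; fb).
Proof.
  intros a a' b b' fa fb [x [u [p t]]]. unfold pm_lam, LUact, pmTact; simpl. pi. norm.
  rewrite <- (lunit_nat C M _ _ fb s1 s). norm. reflexivity.
Qed.

Lemma L_rho_resp (C : Category) (M : PartMonCat C) (cos : IsCosieve M) :
  forall (a b : C) (r r' : RUcar (pmT M) (pmU M) a b),
        RUeq (pmTact cos) (@pmUact C M) r r' -> pm_rho r = pm_rho r'.
Proof.
  intros a b. apply clos_eq. intros r r' H. destruct H as [x x' f u [p t]].
  unfold pm_rho, pmTact, pmUact; simpl. pi. norm. reflexivity.
Qed.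

Lemma L_rho_inv_l (C : Category) (M : PartMonCat C) (cos : IsCosieve M) :
  forall (a b : C) (r : RUcar (pmT M) (pmU M) a b),
        RUeq (pmTact cos) (@pmUact C M) (pm_rho_inv (pm_rho r)) r.
Proof.
  intros a b [x [u [p t]]]. unfold pm_rho, pm_rho_inv; simpl.
  apply rst_step. eapply (@step1 _ (pmU M) _ _ _ x (unitO M) u (idm _) (existT _ p t)).
  - unfold pmTact; simpl. pi. f_equal. f_equal. f_equal. norm. reflexivity.
  - unfold pmUact; simpl. norm. reflexivity.
Qed.

Lemma L_rho_inv_r (C : Category) (M : PartMonCat C) :
  forall (a b : C) (h : Hom a b), pm_rho (pm_rho_inv (M:=M) h) = h.
Proof. intros a b h. unfold pm_rho, pm_rho_inv; simpl. norm. reflexivity. Qed.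

Lemma L_rho_nat (C : Category) (M : PartMonCat C) (cos : IsCosieve M) :
  forall (a a' b b' : C) (fa : Hom a' a) (fb : Hom b b') (r : RUcar (pmT M) (pmU M) a b),
        pm_rho (RUact (pmTact cos) fa fb r) = fa;; (pm_rho r;; fb).
Proof.
  intros a a' b b' fa fb [x [u [p t]]]. unfold pm_rho, RUact, pmTact; simpl. pi. norm.
  rewrite <- (runit_nat C M _ _ fb s1 s). norm. reflexivity.
Qed.

Lemma step2 (C : Category) (A : C -> Type) (B : C -> C -> Type) (D : C -> Type) Am Bm Dm
  (x x' y y' : C) (f : Hom x x') (g : Hom y y') (s : A x') (t : B x y') (u : D y) U V :
  U = existT _ x' (existT _ y' (s, Bm _ _ _ _ f (idm y') t, Dm _ _ g u)) ->
  V = existT _ x (existT _ y (Am _ _ f s, Bm _ _ _ _ (idm x) g t, u)) ->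
  @coend2_step C A B D Am Bm Dm U V.
Proof. intros -> ->; constructor. Qed.

Lemma L_pentagon (C : Category) (M : PartMonCat C) (cos : IsCosieve M) :
  forall (e a b c d x y : C) (s : pmT M x a b) (t : pmT M y x c) (w : pmT M e y d),
      let r1 := pm_alpha cos (d:=y) (a:=a) (b:=b) (c:=c) (existT _ x (s, t)) in
      let r2 := pm_alpha cos (d:=e) (a:=a) (b:=projT1 r1) (c:=d) (existT _ y (snd (projT2 r1), w)) in
      let r3 := pm_alpha cos (d:=projT1 r2) (a:=b) (b:=c) (c:=d) (existT _ (projT1 r1) (fst (projT2 r1), fst (projT2 r2))) in
      let r4 := pm_alpha cos (d:=e) (a:=x) (b:=c) (c:=d) (existT _ y (t, w)) in
      let r5 := pm_alpha cos (d:=e) (a:=a) (b:=b) (c:=projT1 r4) (existT _ x (s, snd (projT2 r4))) in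
      PTeq (pmTact cos) (existT _ (projT1 r3) (existT _ (projT1 r2)
              (fst (projT2 r3), snd (projT2 r3), snd (projT2 r2))))
           (existT _ (projT1 r4) (existT _ (projT1 r5)
              (fst (projT2 r4), fst (projT2 r5), snd (projT2 r5)))).
Proof.
  intros e a b c d x y [p s] [q t] [q1 w] r1 r2 r3 r4 r5.
  subst r1 r2 r3 r4 r5. cbv beta iota zeta delta [pm_alpha projT1 projT2 fst snd]. pi.
  match goal with |- PTeq _ (existT _ ?X (existT _ ?Y (_, existT _ _ (_ ;; ?g), ?u))) (existT _ _ (existT _ ?Y' (?s, ?t, _))) =>
    apply rst_sym, rst_step; eapply (@step2 _ _ _ _ _ _ _ X X Y Y' (idm X) g s t u) end.
  - unfold pmTact; simpl. pi. exeq; norm; try reflexivity.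
    match goal with
    | s7 : Sdom M (tensO M ?s6) d, s8 : Sdom M (tensO M p) c, s1 : Sdom M b c,
      s2 : Sdom M (tensO M s1) d, s5 : Sdom M a (tensO M s2), s0 : Sdom M c d,
      s3 : Sdom M b (tensO M s0), s11 : Sdom M a (tensO M s3),
      s12 : Sdom M (tensO M p) (tensO M s0), s13 : Sdom M x (tensO M s0),
      s14 : Sdom M (tensO M q) d |- _ =>
      let X := constr:(cos _ _ _ _ s7 (assoc_inv C M a b c p s8 s1 s6) (idm d)) in
      pose proof (pentagon C M a b c d p s8 X s1 s6 s7 s2 s5 s0 s3 s11 s12) as P;
      pose proof (assoc_nat C M x c d (tensO M p) c d s (idm c) (idm d) q s14 s0 s13 s8 X s0 s12) as N
    end.
    rewrite tensM_id in N. rewrite !comp_assoc in P.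
    rewrite (@tail_eq _ _ _ _ _ _ _ _ _ N). rewrite !comp_assoc. rewrite <- P. norm. reflexivity.
  - unfold pmTact; simpl. pi. exeq; norm; reflexivity.
Qed.

Lemma tm_split_r (C : Category) (M : PartMonCat C) a b a' b' b'' (p : Sdom M a b) (p' : Sdom M a' b') (p'' : Sdom M a' b'') f g g' :
  tensM M p p'' f (g;;g') = tensM M p p' f g ;; tensM M p' p'' (idm a') g'.
Proof. rewrite <- tensM_comp, comp_id_r; reflexivity. Qed.

Lemma L_triangle (C : Category) (M : PartMonCat C) (cos : IsCosieve M) :
  forall (e a b x y : C) (u : pmU M y) (t1 : pmT M x a y) (t2 : pmT M e x b),
      let r := pm_alpha cos (d:=e) (a:=a) (b:=y) (c:=b) (existT _ x (t1, t2)) in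
      pmTact cos (idm e) (idm a)
         (pm_lam (a:=projT1 r) (b:=b) (existT _ y (u, fst (projT2 r))))
         (snd (projT2 r))
      = pmTact cos (idm e) (pm_rho (a:=x) (b:=a) (existT _ y (u, t1))) (idm b) t2.
Proof.
  intros e a b x y u [p t1] [q t2] r. subst r.
  cbv beta iota zeta delta [pm_alpha pm_lam pm_rho pmTact projT1 projT2 fst snd]. pi.
  exeq. norm.
  match goal with
  | s : Sdom M a b, s0 : Sdom M y b, s1 : Sdom M a (tensO M ?s0'), s2 : Sdom M (tensO M p) b,
    s3 : Sdom M (unitO M) b, s5 : Sdom M a (unitO M) |- _ =>
    let Q1 := constr:(cos _ _ _ _ s1 (idm a) (tensM M s0 s3 u (idm b))) in
    let P1 := constr:(cos _ _ _ _ s2 (tensM M p s5 (idm a) u) (idm b)) in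
    rewrite (tm_split_r C M _ _ _ _ _ s1 Q1 s);
    rewrite (@tail_eq _ _ _ _ _ _ _ _ _ (assoc_nat C M a y b a (unitO M) b (idm a) u (idm b) p s2 s0 s1 s5 P1 s3 Q1));
    rewrite !comp_assoc;
    rewrite (triangle C M a b s5 P1 s3 Q1 s)
  end.
  norm. reflexivity.
Qed.

Theorem mainTheorem16 (C : Category) (M : PartMonCat C) (cos : IsCosieve M) :
  inhabited (@Promonoidal C (pmT M) (@pmTact C M cos) (pmU M) (@pmUact C M)).
Proof.
  constructor.
  refine (Build_Promonoidal _ _ _ _ _ (L_ta_id C M cos) (L_ta_comp C M cos) _ _
    (fun d a b c => @pm_alpha C M cos d a b c) (fun d a b c => @pm_alpha_inv C M cos d a b c)
    (L_alpha_resp C M cos) (L_alpha_inv_resp C M cos) (L_alpha_inv_l C M cos) (L_alpha_inv_r C M cos)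
    (L_alpha_nat C M cos)
    (fun a b => @pm_lam C M a b) (fun a b => @pm_lam_inv C M a b)
    (L_lam_resp C M cos) (L_lam_inv_l C M cos) (L_lam_inv_r C M) (L_lam_nat C M cos)
    (fun a b => @pm_rho C M a b) (fun a b => @pm_rho_inv C M a b)
    (L_rho_resp C M cos) (L_rho_inv_l C M cos) (L_rho_inv_r C M) (L_rho_nat C M cos)
    (L_pentagon C M cos) (L_triangle C M cos)).
  - intros a u. unfold pmUact. apply comp_id_l.
  - intros a a1 a2 f1 f2 u. unfold pmUact. symmetry. apply comp_assoc.
Qed.
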